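(* Let $d>0$ be square-free, $r$ a positive divisor of $d$, $s=-d/r$, and $u,v\in\mathbb{Z}$ with $us-vr=1$; set $\sigma_r=\begin{pmatrix}\sqrt{-d}&r\\ vr&u\sqrt{-d}\end{pmatrix}$. Let $m,c\in\mathbb{Z}$ with $0<m<d/2$ and $0<m^2-dc<d/4$, and $A=\begin{pmatrix}d&m\sqrt{-d}\\ -m\sqrt{-d}&dc\end{pmatrix}$. Then $\sigma_r^*A\sigma_r$ corresponds to an orientable embedded totally geodesic surface in $\Omega_d$.
   Context: $\mathcal{O}_d$ is the ring of integers of $\mathbb{Q}(\sqrt{-d})$, $\Gamma_d=\mathrm{PSL}(2,\mathcal{O}_d)$, $\Omega_d=\mathbb{H}^3/\Gamma_d$; $\sigma^*$ is conjugate transpose. A Hermitian matrix $A'$ corresponds to the totally geodesic surface in $\Omega_d$ that is the image of the hyperbolic plane $H$ bounded by the circle $\mathcal{C}=\{z:(z\ 1)A'(\bar z\ 1)^T=0\}$ (for $A'=\sigma_r^*A\sigma_r$ this circle is the image under the Möbius map $\sigma_r^{-1}$ of the circle of $A$). The surface is embedded if for all $\gamma\in\Gamma_d$, $\gamma H=H$ or $\gamma H\cap H=\emptyset$; it is orientable if no element of $\Gamma_d$ preserving $\mathcal{C}$ interchanges the two components of $(\mathbb{C}\cup\{\infty\})\setminus\mathcal{C}$. *)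

(* Defs.v *)
From mathcomp Require Import all_boot all_order all_algebra.
From mathcomp Require Import complex Rstruct.
From Stdlib Require Import Reals.
Set Implicit Arguments. Unset Strict Implicit. Unset Printing Implicit Defensive.
Import GRing.Theory Num.Theory.
Local Open Scope ring_scope.

Definition C : numClosedFieldType := R[i].

Definition squarefree (d : nat) : Prop := forall p : nat, prime p -> ~~ dvdn (p * p)%N d.

(* sqrt(-d) in C (the root i*sqrt d) *)
Definition sqrt_md (d : nat) : C := sqrtC (- (d%:R)).

Definition omega (d : nat) : C :=
  if modn d 4 == 3%N then (1 + sqrt_md d) / 2%:R else sqrt_md d.
Definition in_Od (d : nat) (x : C) : Prop :=
  exists a b : int, x = a%:~R + b%:~R * omega d.

Definition i0 : 'I_2 := ord0.
Definition i1 : 'I_2 := ord_max.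

Definition mx2 (a b c e : C) : 'M[C]_2 :=
  \matrix_(i < 2, j < 2)
    if i == i0 then (if j == i0 then a else b) else (if j == i0 then c else e).

Definition ctrmx (m n : nat) (A : 'M[C]_(m, n)) : 'M[C]_(n, m) := map_mx Num.conj (A^T).

(* elements of SL(2, O_d); Gamma_d = PSL(2,O_d) acts on H^3 and on the
   Riemann sphere through these matrices (the kernel {+-1} acts trivially) *)
Definition in_SL2Od (d : nat) (g : 'M[C]_2) : Prop :=
  (forall i j, in_Od d (g i j)) /\ \det g = 1.

(* upper half space model H^3 = { (z, t) : z in C, t real, t > 0 } ; t is
   stored as an element of C with 0 < t (so t is a positive real) *)
Definition point := (C * C)%type.
Definition inH3 (p : point) : Prop := 0 < p.2.

(* Poincare extension of the Moebius transformation g to H^3 *)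
Definition act (g : 'M[C]_2) (p : point) : point :=
  let a := g i0 i0 in let b := g i0 i1 in let c := g i1 i0 in let e := g i1 i1 in
  let z := p.1 in let t := p.2 in
  let den := (c * z + e) * (c * z + e)^* + c * c^* * t ^+ 2 in
  (((a * z + b) * (c * z + e)^* + a * c^* * t ^+ 2) / den, t / den).

(* Hermitian matrix giving a genuine circle *)
Definition is_circle (A : 'M[C]_2) : Prop := ctrmx A = A /\ \det A < 0.

(* the hyperbolic plane H in H^3 bounded by the circle
   C = { z : (z 1) A (conj z 1)^T = 0 }, i.e. the hemisphere / vertical half-plane
   A00 (|z|^2 + t^2) + A10 conj z + A01 z + A11 = 0 *)
Definition plane (A : 'M[C]_2) (p : point) : Prop :=
  inH3 p /\
  A i0 i0 * (p.1 * p.1^* + p.2 ^+ 2) + A i1 i0 * p.1^* + A i0 i1 * p.1 + A i1 i1 = 0.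

Definition image_pt (g : 'M[C]_2) (S : point -> Prop) (q : point) : Prop :=
  exists p, S p /\ q = act g p.

Definition embedded (d : nat) (A : 'M[C]_2) : Prop :=
  forall g, in_SL2Od d g ->
    (forall q, image_pt g (plane A) q <-> plane A q) \/
    (forall q, ~ (image_pt g (plane A) q /\ plane A q)).

(* Riemann sphere = P^1(C), represented by nonzero column vectors w
   (z <-> (z,1), infinity <-> (1,0)); g acts by w |-> g w.
   The value of the form at w is w^T A conj(w), i.e. (z 1) A (conj z 1)^T. *)
Definition hform (A : 'M[C]_2) (w : 'cV[C]_2) : C :=
  ((w^T *m A *m map_mx Num.conj w) ord0 ord0).

Definition on_circle (A : 'M[C]_2) (w : 'cV[C]_2) : Prop := w != 0 /\ hform A w = 0.
Definition pos_side (A : 'M[C]_2) (w : 'cV[C]_2) : Prop := w != 0 /\ 0 < hform A w.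
Definition neg_side (A : 'M[C]_2) (w : 'cV[C]_2) : Prop := w != 0 /\ hform A w < 0.

Definition image_vec (g : 'M[C]_2) (S : 'cV[C]_2 -> Prop) (w : 'cV[C]_2) : Prop :=
  exists w0, S w0 /\ w = g *m w0.

Definition preserves_circle (g A : 'M[C]_2) : Prop :=
  forall w, image_vec g (on_circle A) w <-> on_circle A w.

Definition interchanges_sides (g A : 'M[C]_2) : Prop :=
  (forall w, image_vec g (pos_side A) w <-> neg_side A w) /\
  (forall w, image_vec g (neg_side A) w <-> pos_side A w).

Definition orientable (d : nat) (A : 'M[C]_2) : Prop :=
  forall g, in_SL2Od d g -> preserves_circle g A -> ~ interchanges_sides g A.

Definition orientable_embedded_tg_surface (d : nat) (A : 'M[C]_2) : Prop :=
  is_circle A /\ embedded d A /\ orientable d A.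

(* Main.v *)
Require Import Defs.
From mathcomp Require Import all_boot all_order all_algebra.
From mathcomp Require Import complex Rstruct.
From mathcomp Require Import ring zify.
Set Implicit Arguments. Unset Strict Implicit. Unset Printing Implicit Defensive.
Import Order.TTheory GRing.Theory Num.Theory.
Local Open Scope ring_scope.

Lemma ord2_cases (i : 'I_2) : i = i0 \/ i = i1.
Proof. case: i => [[|[|k]]] Hi; [left|right|]; try by apply/val_inj. by []. Qed.

Lemma mx2E a b c e : 
  [/\ mx2 a b c e i0 i0 = a, mx2 a b c e i0 i1 = b, mx2 a b c e i1 i0 = c & mx2 a b c e i1 i1 = e].
Proof. by rewrite !mxE. Qed.

Lemma mx2_eta (M : 'M[C]_2) : M = mx2 (M i0 i0) (M i0 i1) (M i1 i0) (M i1 i1).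
Proof. apply/matrixP => i j; rewrite mxE.
by case: (ord2_cases i) => ->; case: (ord2_cases j) => ->. Qed.

Lemma sum2 (F : 'I_2 -> C) : \sum_(i < 2) F i = F i0 + F i1.
Proof. rewrite !big_ord_recl big_ord0 addr0. congr (F _ + F _); by apply/val_inj. Qed.

Lemma mulmx2 a b c e a' b' c' e' :
  mx2 a b c e *m mx2 a' b' c' e' =
  mx2 (a * a' + b * c') (a * b' + b * e') (c * a' + e * c') (c * b' + e * e').
Proof.
apply/matrixP => i j; rewrite !mxE sum2 !mxE.
by case: (ord2_cases i) => ->; case: (ord2_cases j) => ->.
Qed.

Lemma tr2 a b c e : (mx2 a b c e)^T = mx2 a c b e.
Proof. apply/matrixP => i j; rewrite !mxE.
by case: (ord2_cases i) => ->; case: (ord2_cases j) => ->. Qed.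

Lemma map2 (f : C -> C) a b c e : map_mx f (mx2 a b c e) = mx2 (f a) (f b) (f c) (f e).
Proof. apply/matrixP => i j; rewrite !mxE.
by case: (ord2_cases i) => ->; case: (ord2_cases j) => ->. Qed.

Lemma det2 a b c e : \det (mx2 a b c e) = a * e - b * c.
Proof.
rewrite (expand_det_row _ ord0) sum2 /cofactor !det_mx11 !mxE /=.
rewrite addn0 add0n expr0 expr1 mul1r. ring.
Qed.

Notation cj := (@Num.conj C).

Definition cv2 (x y : C) : 'cV[C]_2 := \col_(i < 2) (if i == i0 then x else y).

Lemma cv2_eta (w : 'cV[C]_2) : w = cv2 (w i0 0) (w i1 0).
Proof. apply/matrixP => i j; rewrite mxE. rewrite (ord1 j).
by case: (ord2_cases i) => ->. Qed.

Lemma mulmxv2 a b c e x y : mx2 a b c e *m cv2 x y = cv2 (a * x + b * y) (c * x + e * y).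
Proof. apply/matrixP => i j; rewrite !mxE sum2 !mxE.
by case: (ord2_cases i) => ->. Qed.

Lemma cv2_neq0 x y : x != 0 \/ y != 0 -> cv2 x y != 0.
Proof.
move=> H; apply/negP => /eqP E.
have Ex : x = 0 by have := congr1 (fun M : 'cV[C]_2 => M i0 0) E; rewrite !mxE.
have Ey : y = 0 by have := congr1 (fun M : 'cV[C]_2 => M i1 0) E; rewrite !mxE.
by case: H; rewrite ?Ex ?Ey eqxx.
Qed.

Lemma hform2 a b c e x y :
  hform (mx2 a b c e) (cv2 x y) = a * x * cj x + b * x * cj y + c * y * cj x + e * y * cj y.
Proof.
rewrite /hform !mxE sum2 !mxE !sum2 !mxE /=. ring.
Qed.

Lemma hform_mul (A M : 'M[C]_2) (w : 'cV[C]_2) :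
  hform A (M *m w) = hform (M^T *m A *m map_mx cj M) w.
Proof. by rewrite /hform trmx_mul map_mxM !mulmxA. Qed.

Lemma ctrmxE (S : 'M[C]_2) : ctrmx S = (map_mx cj S)^T.
Proof. by rewrite /ctrmx map_trmx. Qed.

Lemma map_cjK (S : 'M[C]_2) : map_mx cj (map_mx cj S) = S.
Proof. apply/matrixP => i j; by rewrite !mxE conjCK. Qed.

Lemma hform_ct (A S : 'M[C]_2) w :
  hform (ctrmx S *m A *m S) w = hform A (map_mx cj S *m w).
Proof. by rewrite hform_mul map_cjK ctrmxE. Qed.

Lemma hform_scale (A : 'M[C]_2) k w : hform A (k *: w) = k * cj k * hform A w.
Proof.
rewrite (cv2_eta w) (mx2_eta A).
have -> : k *: cv2 (w i0 0) (w i1 0) = cv2 (k * w i0 0) (k * w i1 0).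
  by apply/matrixP => i j; rewrite !mxE; case: ifP.
rewrite !hform2 !rmorphM /=. ring.
Qed.

Lemma cjD (x y : C) : cj (x + y) = cj x + cj y. Proof. exact: rmorphD. Qed.
Lemma cjB (x y : C) : cj (x - y) = cj x - cj y. Proof. exact: rmorphB. Qed.
Lemma cjN (x : C) : cj (- x) = - cj x. Proof. exact: rmorphN. Qed.
Lemma cjM (x y : C) : cj (x * y) = cj x * cj y. Proof. exact: rmorphM. Qed.
Lemma cjX (x : C) n : cj (x ^+ n) = cj x ^+ n. Proof. exact: rmorphXn. Qed.
Lemma cjV (x : C) : cj (x^-1) = (cj x)^-1. Proof. exact: fmorphV. Qed.
Lemma cj1 : cj 1 = 1. Proof. exact: rmorph1. Qed.
Lemma cjK (x : C) : cj (cj x) = x. Proof. exact: conjCK. Qed.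
Definition cjE := (cjD, cjB, cjN, cjM, cjX, cjV, cj1, cjK).

Lemma cj_int (n : int) : cj n%:~R = n%:~R.
Proof. by rewrite rmorph_int. Qed.

Lemma cj_nat (n : nat) : cj n%:R = n%:R.
Proof. by rewrite rmorph_nat. Qed.

Section Delta.
Variable d : nat.
Hypothesis d_gt0 : (0 < d)%N.
Local Notation dl := (sqrt_md d).

Lemma dl_sq : dl * dl = - d%:R.
Proof. by rewrite -expr2 /sqrt_md sqrtCK. Qed.

Lemma dl_neq0 : dl != 0.
Proof.
apply/eqP => E; have := dl_sq; rewrite E mulr0 => /eqP.
rewrite eq_sym oppr_eq0 pnatr_eq0 => /eqP Hd0. by move: d_gt0; rewrite Hd0.
Qed.

Lemma dl_cj : cj dl = - dl.
Proof.
have H : (cj dl - dl) * (cj dl + dl) = 0.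
  have := congr1 cj dl_sq; rewrite rmorphM rmorphN rmorph_nat /= => E.
  have E2 : cj dl * cj dl = dl * dl by rewrite E dl_sq.
  by rewrite mulrDr !mulrBl E2 [dl * cj dl]mulrC; ring.
move/eqP: H; rewrite mulf_eq0 => /orP [/eqP H|/eqP H].
- exfalso; have E : cj dl = dl by apply/eqP; rewrite -subr_eq0 H.
  have := mul_conjC_ge0 dl; rewrite E dl_sq oppr_ge0 => H2.
  have H3 : (0 : C) < d%:R by rewrite ltr0n.
  by rewrite (lt_geF H3) in H2.
- by apply/eqP; rewrite -addr_eq0 H.
Qed.

Lemma dl_norm : dl * cj dl = d%:R.
Proof. by rewrite dl_cj mulrN dl_sq opprK. Qed.

Lemma omega_facts : exists t0 n0 e0 a0 b0 : int,
  [/\ omega d + cj (omega d) = t0%:~R, omega d * cj (omega d) = n0%:~R,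
      omega d - cj (omega d) = e0%:~R * dl & dl = a0%:~R + b0%:~R * omega d].
Proof.
rewrite /omega; case: ifP => H.
- have Hd : (d%:R : C) = 4%:R * (d %/ 4)%:R + 3%:R.
    by rewrite {1}(divn_eq d 4) (eqP H) natrD natrM mulrC.
  have h2 : (2%:R : C) != 0 by rewrite pnatr_eq0.
  have c2 : cj (2%:R^-1) = (2%:R : C)^-1 by rewrite fmorphV rmorph_nat.
  exists 1, ((d %/ 4)%:Z + 1), 1, (-1), 2.
  rewrite !rmorphM rmorphD /= c2 dl_cj rmorph1 /=.
  have i1 : (1%:~R : C) = 1 by [].
  have i2 : (2%:~R : C) = 2%:R by [].
  have im1 : ((-1)%:~R : C) = -1 by rewrite intrN.
  have iq : ((d %/ 4)%:Z + 1)%:~R = ((d %/ 4)%:R + 1 : C) by rewrite intrD.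
  rewrite i1 i2 im1 iq; split.
  + by field.
  + apply: (@eq_trans _ _ ((1 - dl * dl) / 4%:R : C)).
      by field.
    rewrite dl_sq Hd. by field.
  + by field.
  + by field.
- exists 0, d%:Z, 2, 0, 1; split.
  + by rewrite dl_cj subrr.
  + by rewrite dl_norm.
  + rewrite dl_cj opprK. have -> : (2%:~R : C) = 1 + 1 by []. by rewrite mulrDl !mul1r.
  + by rewrite add0r mul1r.
Qed.

Local Notation w := (omega d).

Lemma Od_int (n : int) : in_Od d n%:~R.
Proof. by exists n, 0; rewrite mul0r addr0. Qed.

Lemma Od_add x y : in_Od d x -> in_Od d y -> in_Od d (x + y).
Proof. move=> [a [b ->]] [a' [b' ->]]; exists (a + a'), (b + b'); rewrite !intrD; ring. Qed.

Lemma Od_opp x : in_Od d x -> in_Od d (- x).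
Proof. move=> [a [b ->]]; exists (- a), (- b); rewrite !intrN; ring. Qed.

Lemma Od_sub x y : in_Od d x -> in_Od d y -> in_Od d (x - y).
Proof. by move=> Hx Hy; apply: Od_add => //; apply: Od_opp. Qed.

Lemma Od_mul x y : in_Od d x -> in_Od d y -> in_Od d (x * y).
Proof.
move=> [a [b ->]] [a' [b' ->]].
have [t0 [n0 [e0 [a0 [b0 [H1 H2 H3 H4]]]]]] := omega_facts.
have Hw2 : w * w = t0%:~R * w - n0%:~R.
  have -> : t0%:~R * w = w * (w + cj w) by rewrite H1 mulrC.
  by rewrite -H2; ring.
exists (a * a' - b * b' * n0), (a * b' + a' * b + b * b' * t0).
rewrite !intrD !intrN !intrM.
transitivity (a%:~R * a'%:~R + (a%:~R * b'%:~R + a'%:~R * b%:~R) * w + b%:~R * b'%:~R * (w * w) : C).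
  by ring.
rewrite Hw2; ring.
Qed.

Lemma Od_cj x : in_Od d x -> in_Od d (cj x).
Proof.
move=> [a [b ->]].
have [t0 [n0 [e0 [a0 [b0 [H1 H2 H3 H4]]]]]] := omega_facts.
have Hc : cj w = t0%:~R - w by rewrite -H1; ring.
exists (a + b * t0), (- b).
rewrite rmorphD rmorphM /= !cj_int Hc !intrD !intrN !intrM; ring.
Qed.

Lemma Od_dl : in_Od d dl.
Proof.
have [t0 [n0 [e0 [a0 [b0 [H1 H2 H3 H4]]]]]] := omega_facts.
by exists a0, b0.
Qed.

Lemma Od_im x : in_Od d x -> exists e : int, x - cj x = e%:~R * dl.
Proof.
move=> [a [b ->]].
have [t0 [n0 [e0 [a0 [b0 [H1 H2 H3 H4]]]]]] := omega_facts.
exists (b * e0). rewrite rmorphD rmorphM /= !cj_int intrM.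
transitivity (b%:~R * (w - cj w) : C); first by ring.
rewrite H3; ring.
Qed.

Lemma Od_norm x : in_Od d x -> exists n : int, x * cj x = n%:~R.
Proof.
move=> [a [b ->]].
have [t0 [n0 [e0 [a0 [b0 [H1 H2 H3 H4]]]]]] := omega_facts.
exists (a * a + a * b * t0 + b * b * n0).
rewrite rmorphD rmorphM /= !cj_int !intrD !intrM.
transitivity (a%:~R * a%:~R + a%:~R * b%:~R * (w + cj w) + b%:~R * b%:~R * (w * cj w) : C).
  by ring.
by rewrite H1 H2.
Qed.

Lemma Od_tr x : in_Od d x -> exists k : int, x + cj x = k%:~R.
Proof.
move=> [a [b ->]].
have [t0 [n0 [e0 [a0 [b0 [H1 H2 H3 H4]]]]]] := omega_facts.
exists (2 * a + b * t0). rewrite cjD cjM !cj_int intrD !intrM.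
transitivity (2%:R * a%:~R + b%:~R * (w + cj w) : C); first by ring.
by rewrite H1.
Qed.

End Delta.
Arguments Od_mul {d} _ {x y}. Arguments Od_cj {d} _ {x}. Arguments Od_im {d} _ {x}.
Arguments Od_norm {d} _ {x}. Arguments Od_tr {d} _ {x}.
Arguments Od_add {d x y}. Arguments Od_sub {d x y}.

Definition Phi (A : 'M[C]_2) (p : point) : C :=
  A i0 i0 * (p.1 * cj p.1 + p.2 ^+ 2) + A i1 i0 * cj p.1 + A i0 i1 * p.1 + A i1 i1.

Lemma plane_Phi A p : plane A p <-> inH3 p /\ Phi A p = 0.
Proof. by []. Qed.

Definition den (g : 'M[C]_2) (p : point) : C :=
  (g i1 i0 * p.1 + g i1 i1) * cj (g i1 i0 * p.1 + g i1 i1) + g i1 i0 * cj (g i1 i0) * p.2 ^+ 2.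

Definition Gm (g F : 'M[C]_2) := g^T *m F *m map_mx cj g.

Lemma Gm2 a b c e f0 f1 f2 f3 :
  Gm (mx2 a b c e) (mx2 f0 f1 f2 f3) =
  mx2 (a * f0 * cj a + c * f2 * cj a + a * f1 * cj c + c * f3 * cj c)
      (a * f0 * cj b + c * f2 * cj b + a * f1 * cj e + c * f3 * cj e)
      (b * f0 * cj a + e * f2 * cj a + b * f1 * cj c + e * f3 * cj c)
      (b * f0 * cj b + e * f2 * cj b + b * f1 * cj e + e * f3 * cj e).
Proof. rewrite /Gm tr2 map2 !mulmx2. congr mx2; ring. Qed.

Lemma act_scalar (a b c e f0 f1 f2 f3 z t : C) :
  a * e - b * c = 1 -> cj t = t ->
  (c * z + e) * cj (c * z + e) + c * cj c * t ^+ 2 != 0 ->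
  let num := (a * z + b) * cj (c * z + e) + a * cj c * t ^+ 2 in
  let D := (c * z + e) * cj (c * z + e) + c * cj c * t ^+ 2 in
  (f0 * (num / D * (cj num / D) + (t / D) ^+ 2) + f2 * (cj num / D) +
   f1 * (num / D) + f3) * D =
  (a * f0 * cj a + c * f2 * cj a + a * f1 * cj c + c * f3 * cj c) *
  (z * cj z + t ^+ 2) +
  (b * f0 * cj a + e * f2 * cj a + b * f1 * cj c + e * f3 * cj c) * cj z +
  (a * f0 * cj b + c * f2 * cj b + a * f1 * cj e + c * f3 * cj e) * z +
  (b * f0 * cj b + e * f2 * cj b + b * f1 * cj e + e * f3 * cj e).
Proof.
move=> Hdet Ht HD num D.
have Hdc : (a * e - b * c) * cj (a * e - b * c) = 1 by rewrite Hdet cj1 mulr1.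
pose M00 := (a * z + b) * cj (a * z + b) + a * cj a * t ^+ 2.
have key : num * cj num + t ^+ 2 = M00 * D.
  rewrite -[t ^+ 2 in LHS]mul1r -Hdc /num /M00 /D.
  rewrite !cjE Ht. ring.
transitivity (f0 * (num * cj num + t ^+ 2) / D + f2 * cj num + f1 * num + f3 * D).
  move: HD; rewrite -/D => HD. clearbody num D. by field.
rewrite key.
have -> : f0 * (M00 * D) / D = f0 * M00.
  move: HD; rewrite -/D => HD. clearbody M00 D. by field.
rewrite /num /M00 /D !cjE Ht. ring.
Qed.

Lemma Phi_act (g F : 'M[C]_2) (z t : C) :
  \det g = 1 -> cj t = t -> den g (z, t) != 0 ->
  Phi F (act g (z, t)) * den g (z, t) = Phi (Gm g F) (z, t).
Proof.
have -> : Gm g F = Gm (mx2 (g i0 i0) (g i0 i1) (g i1 i0) (g i1 i1)) (mx2 (F i0 i0) (F i0 i1) (F i1 i0) (F i1 i1)) by rewrite -!mx2_eta.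
rewrite {1}(mx2_eta g) det2 Gm2.
move=> Hdet Ht HD.
rewrite /Phi /den /act !mxE /= in HD *.
have cD : cj ((g i1 i0 * z + g i1 i1) * cj (g i1 i0 * z + g i1 i1) + g i1 i0 * cj (g i1 i0) * t ^+ 2) = 
   (g i1 i0 * z + g i1 i1) * cj (g i1 i0 * z + g i1 i1) + g i1 i0 * cj (g i1 i0) * t ^+ 2.
  by rewrite !cjE Ht; ring.
rewrite !cjM cjV cD.
exact: act_scalar.
Qed.

Lemma real_cj (x : C) : 0 < x -> cj x = x.
Proof. by move/gtr0_real/CrealP. Qed.

Lemma den_gt0 g z t : \det g = 1 -> 0 < t -> 0 < den g (z, t).
Proof.
rewrite {1}(mx2_eta g) det2 /den /= => Hdet Ht.
have [Hc|Hc] := eqVneq (g i1 i0) 0.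
- rewrite Hc !mul0r !add0r addr0.
  rewrite mul_conjC_gt0; apply/eqP => He.
  by move: Hdet; rewrite He Hc !mulr0 subrr => /eqP; rewrite eq_sym oner_eq0.
- apply: ltr_wpDl; first exact: mul_conjC_ge0.
  apply: mulr_gt0; first by rewrite mul_conjC_gt0.
  by rewrite expr2; apply: mulr_gt0.
Qed.

Definition Xm (p : point) : 'M[C]_2 := mx2 (p.1 * cj p.1 + p.2 ^+ 2) p.1 (cj p.1) 1.

Lemma key_id (a b c e z t : C) :
  a * e - b * c = 1 -> cj t = t ->
  ((a * z + b) * cj (c * z + e) + a * cj c * t ^+ 2) * cj ((a * z + b) * cj (c * z + e) + a * cj c * t ^+ 2) + t ^+ 2
  = ((a * z + b) * cj (a * z + b) + a * cj a * t ^+ 2) * ((c * z + e) * cj (c * z + e) + c * cj c * t ^+ 2).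
Proof.
move=> Hdet Ht.
have Hdc : (a * e - b * c) * cj (a * e - b * c) = 1 by rewrite Hdet cj1 mulr1.
set N := (X in X * cj X + _ = _).
transitivity (N * cj N + (a * e - b * c) * cj (a * e - b * c) * t ^+ 2).
  by rewrite Hdc mul1r.
rewrite /N !cjE Ht. ring.
Qed.

Lemma e00 (num D t M : C) : D != 0 -> cj D = D -> num * cj num + t ^+ 2 = M * D ->
  num / D * cj (num / D) + (t / D) ^+ 2 = D^-1 * M.
Proof.
move=> HD cD K. rewrite cjM cjV cD.
transitivity ((num * cj num + t ^+ 2) / D / D); first by field.
rewrite K. by field.
Qed.

Lemma Xm_act2 (a b c e z t : C) : a * e - b * c = 1 -> cj t = t -> 
  (c * z + e) * cj (c * z + e) + c * cj c * t ^+ 2 != 0 ->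
  Xm (act (mx2 a b c e) (z, t)) = ((c * z + e) * cj (c * z + e) + c * cj c * t ^+ 2)^-1 *:
     (mx2 a b c e *m Xm (z, t) *m (map_mx cj (mx2 a b c e))^T).
Proof.
move=> Hdet Ht HD.
rewrite map2 tr2 /Xm !mulmx2 /act !mxE /=.
apply/matrixP => i j; rewrite !mxE.
have cD : cj ((c * z + e) * cj (c * z + e) + c * cj c * t ^+ 2) = 
   (c * z + e) * cj (c * z + e) + c * cj c * t ^+ 2.
  by rewrite !cjE Ht; ring.
have K := key_id z Hdet Ht.
case: (ord2_cases i) => ->; case: (ord2_cases j) => -> /=.
- rewrite (e00 HD cD K). congr (_ * _); ring.
- rewrite mulrC; congr (_ * _); ring.
- rewrite cjM cjV cD mulrC !cjE Ht; congr (_ * _); ring.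
- apply/esym. rewrite mulr1. transitivity (((c * z + e) * cj (c * z + e) + c * cj c * t ^+ 2)^-1 *
    ((c * z + e) * cj (c * z + e) + c * cj c * t ^+ 2)); first by congr (_ * _); ring.
  by rewrite mulVf.
Qed.


Lemma mx2_1 : mx2 1 0 0 1 = 1%:M.
Proof. apply/matrixP => i j; rewrite !mxE.
by case: (ord2_cases i) => ->; case: (ord2_cases j) => ->. Qed.

Lemma den2 (a b c e z t : C) : den (mx2 a b c e) (z, t) = (c * z + e) * cj (c * z + e) + c * cj c * t ^+ 2.
Proof. by rewrite /den !mxE. Qed.

Lemma act2_t (a b c e z t : C) : (act (mx2 a b c e) (z, t)).2 = t / den (mx2 a b c e) (z, t).
Proof. by rewrite /act /den !mxE. Qed.

Lemma Xm11 p : Xm p i1 i1 = 1. Proof. by rewrite /Xm mxE. Qed.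
Lemma Xm01 p : Xm p i0 i1 = p.1. Proof. by rewrite /Xm mxE. Qed.

Lemma act_inv2 (a b c e : C) (q : point) : a * e - b * c = 1 -> inH3 q ->
  act (mx2 a b c e) (act (mx2 e (- b) (- c) a) q) = q.
Proof.
case: q => z t Hdet Ht; rewrite /inH3 /= in Ht.
have Hdet' : e * a - (- b) * (- c) = 1 by rewrite -Hdet; ring.
have dg : \det (mx2 a b c e) = 1 by rewrite det2.
have dg' : \det (mx2 e (- b) (- c) a) = 1 by rewrite det2.
have D1p := den_gt0 z dg' Ht.
case E : (act (mx2 e (- b) (- c) a) (z, t)) => [z1 t1].
have Et1 : t1 = t / den (mx2 e (- b) (- c) a) (z, t) by rewrite -act2_t E.
have t1p : 0 < t1 by rewrite Et1 divr_gt0.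
have D2p := den_gt0 z1 dg t1p.
have X1 := @Xm_act2 e (- b) (- c) a z t Hdet' (real_cj Ht).
rewrite -(den2 e (- b) (- c) a z t) E in X1.
have X2 := @Xm_act2 a b c e z1 t1 Hdet (real_cj t1p).
rewrite -(den2 a b c e z1 t1) in X2.
move: (X1 (lt0r_neq0 D1p)) (X2 (lt0r_neq0 D2p)) => {X1 X2} X1 X2.
rewrite X1 in X2.
have gg : mx2 a b c e *m mx2 e (- b) (- c) a = 1%:M.
  by rewrite mulmx2 -mx2_1; congr mx2; rewrite -?Hdet; ring.
have gg' : (map_mx cj (mx2 e (- b) (- c) a))^T *m (map_mx cj (mx2 a b c e))^T = 1%:M.
  by rewrite -trmx_mul -map_mxM gg map_mx1 trmx1.
move: X2; rewrite -scalemxAr -scalemxAl scalerA !mulmxA gg mul1mx -!mulmxA gg' mulmx1 => X2.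
have Et2 : (act (mx2 a b c e) (z1, t1)).2 = t1 / den (mx2 a b c e) (z1, t1) by rewrite act2_t.
case E2 : (act (mx2 a b c e) (z1, t1)) X2 Et2 => [z2 t2] X2 Et2.
set D1 := den _ (z, t) in X2 Et1 D1p.
set D2 := den _ (z1, t1) in X2 D2p Et2.
have H11 := congr1 (fun M : 'M[C]_2 => M i1 i1) X2.
rewrite /= Xm11 mxE Xm11 mulr1 in H11.
have H01 := congr1 (fun M : 'M[C]_2 => M i0 i1) X2.
rewrite /= Xm01 mxE Xm01 -H11 mul1r /= in H01.
rewrite /= in Et2.
congr (_, _) => //.
rewrite Et2 Et1 -mulrA -invfM.
have -> : D1 * D2 = 1.
  have n1 := lt0r_neq0 D1p. have n2 := lt0r_neq0 D2p.
  have E3 : D2^-1 / D1 * (D1 * D2) = 1.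
    move: n1 n2; clearbody D1 D2 => n1 n2. field; by rewrite n1 n2.
  by rewrite -H11 mul1r in E3.
by rewrite invr1 mulr1.
Qed.


Section Good.
Variables (d r : nat) (Y : int).
Hypothesis d_gt0 : (0 < d)%N.
Local Notation dl := (sqrt_md d).

Definition hm (p t : int) (z : C) : 'M[C]_2 :=
  mx2 (r%:R * d%:R * p%:~R) (r%:R * dl * (Y%:~R + dl * z))
      (cj (r%:R * dl * (Y%:~R + dl * z))) (r%:R * d%:R * t%:~R).

Lemma dN : (d%:R : C) = - (dl * dl).
Proof. by rewrite dl_sq // opprK. Qed.

Lemma good_step (g : 'M[C]_2) (p t : int) (z : C) : in_SL2Od d g -> in_Od d z ->
  exists p' t' : int, exists z', in_Od d z' /\ Gm g (hm p t z) = hm p' t' z'.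
Proof.
move=> [Hg Hdet] Hz.
move: Hdet; rewrite (mx2_eta g) det2.
move: (Hg i0 i0) (Hg i0 i1) (Hg i1 i0) (Hg i1 i1).
set a := g i0 i0; set b := g i0 i1; set c := g i1 i0; set e := g i1 i1.
move=> Ha Hb Hc He Hdet.
have [na Na] := (Od_norm d_gt0) Ha. have [nb Nb] := (Od_norm d_gt0) Hb.
have [nc Nc] := (Od_norm d_gt0) Hc. have [ne Ne] := (Od_norm d_gt0) He.
have [e1 E1] := (Od_im d_gt0) ((Od_mul d_gt0) Ha ((Od_cj d_gt0) Hc)).
have [k1 K1] := (Od_tr d_gt0) ((Od_mul d_gt0) Hz ((Od_mul d_gt0) Ha ((Od_cj d_gt0) Hc))).
have [e3 E3] := (Od_im d_gt0) ((Od_mul d_gt0) Hb ((Od_cj d_gt0) He)).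
have [k3 K3] := (Od_tr d_gt0) ((Od_mul d_gt0) Hz ((Od_mul d_gt0) Hb ((Od_cj d_gt0) He))).
have [eb Eb] := (Od_im d_gt0) Hb. have [ee Ee] := (Od_im d_gt0) He.
have cY : cj (Y%:~R : C) = Y%:~R by rewrite cj_int.
have cdl := dl_cj d_gt0.
exists (p * na + t * nc - (Y * e1 + k1)), (p * nb + t * ne - (Y * e3 + k3)).
exists (Y%:~R * (c * eb%:~R - a * ee%:~R) + z * a * cj e + cj z * c * cj b - p%:~R * a * cj b - t%:~R * c * cj e).
split.
  apply: Od_sub; last by apply: (Od_mul d_gt0); [apply: (Od_mul d_gt0) => //; exact: Od_int|exact: (Od_cj d_gt0)].
  apply: Od_sub; last by apply: (Od_mul d_gt0); [apply: (Od_mul d_gt0) => //; exact: Od_int|exact: (Od_cj d_gt0)].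
  apply: Od_add; last by apply: (Od_mul d_gt0); [apply: (Od_mul d_gt0) => //; exact: (Od_cj d_gt0)|exact: (Od_cj d_gt0)].
  apply: Od_add; last by apply: (Od_mul d_gt0); [apply: (Od_mul d_gt0) => //|exact: (Od_cj d_gt0)].
  apply: (Od_mul d_gt0); first exact: Od_int.
  by apply: Od_sub; apply: (Od_mul d_gt0) => //; exact: Od_int.
rewrite /hm Gm2.
congr mx2.
- transitivity (r%:R * d%:R * p%:~R * (a * cj a) + r%:R * d%:R * t%:~R * (c * cj c) +
     r%:R * dl * (Y%:~R * (a * cj c - cj (a * cj c)) + dl * (z * (a * cj c) + cj (z * (a * cj c))))).
    rewrite !cjE cdl cY; ring.
  rewrite E1 K1 Na Nc !intrD !intrN !intrM dN; ring.
- transitivity (r%:R * dl * (Y%:~R * ((a * e - b * c) - a * (e - cj e) + c * (b - cj b)) + dl * (z * a * cj e + cj z * c * cj b)) + r%:R * d%:R * (p%:~R * a * cj b + t%:~R * c * cj e)).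
    rewrite !cjE cdl cY; ring.
  rewrite Hdet Ee Eb dN; ring.
- apply: (can_inj cjK); rewrite cjK.
  transitivity (r%:R * dl * (Y%:~R * ((a * e - b * c) - a * (e - cj e) + c * (b - cj b)) + dl * (z * a * cj e + cj z * c * cj b)) + r%:R * d%:R * (p%:~R * a * cj b + t%:~R * c * cj e)).
    rewrite !cjE cdl cY !cj_nat; ring.
  rewrite Hdet Ee Eb dN; ring.
- transitivity (r%:R * d%:R * p%:~R * (b * cj b) + r%:R * d%:R * t%:~R * (e * cj e) +
     r%:R * dl * (Y%:~R * (b * cj e - cj (b * cj e)) + dl * (z * (b * cj e) + cj (z * (b * cj e))))).
    rewrite !cjE cdl cY; ring.
  rewrite E3 K3 Nb Ne !intrD !intrN !intrM dN; ring.
Qed.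

Lemma addmx2 a b c e a' b' c' e' :
  mx2 a b c e + mx2 a' b' c' e' = mx2 (a + a') (b + b') (c + c') (e + e').
Proof. apply/matrixP => i j; rewrite !mxE.
by case: (ord2_cases i) => ->; case: (ord2_cases j) => ->. Qed.

Lemma submx2 a b c e a' b' c' e' :
  mx2 a b c e - mx2 a' b' c' e' = mx2 (a - a') (b - b') (c - c') (e - e').
Proof. apply/matrixP => i j; rewrite !mxE.
by case: (ord2_cases i) => ->; case: (ord2_cases j) => ->. Qed.

Lemma natC (n : nat) : ((n%:Z)%:~R : C) = n%:R. Proof. by []. Qed.

Variables (X0 Z0 N : int).
Hypothesis HN : Y * Y - d%:Z * X0 * Z0 = N.

Lemma NC : (N%:~R : C) = Y%:~R * Y%:~R - d%:R * X0%:~R * Z0%:~R.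
Proof. by rewrite -HN intrB !intrM. Qed.

Lemma det_F : \det (hm X0 Z0 0) = (- ((r%:Z * r%:Z) * d%:Z * N))%:~R.
Proof.
have cdl := dl_cj d_gt0.
rewrite /hm det2 intrN !intrM NC natC natC !cjE cdl cj_int cj_nat dN. ring.
Qed.

Lemma det_sum p t z : in_Od d z ->
  exists l : int, \det (hm X0 Z0 0 + hm p t z) = (- ((r%:Z * r%:Z) * d%:Z * (4 * N + d%:Z * l)))%:~R.
Proof.
move=> Hz.
have cdl := dl_cj d_gt0.
have [n Nz] := Od_norm d_gt0 Hz.
have [e Ez] := Od_im d_gt0 Hz.
exists (4 * X0 * Z0 - 2 * Y * e + n - (X0 + p) * (Z0 + t)).
rewrite /hm addmx2 det2.
transitivity ((r%:R * d%:R * X0%:~R + r%:R * d%:R * p%:~R) * (r%:R * d%:R * Z0%:~R + r%:R * d%:R * t%:~R)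
   - r%:R * r%:R * (- (dl * dl)) * (4%:R * Y%:~R * Y%:~R + 2%:R * Y%:~R * dl * (z - cj z) - dl * dl * (z * cj z)) : C).
  rewrite !cjE cdl cj_int cj_nat; ring.
rewrite Ez Nz intrN !(intrM, intrD, intrB) NC !natC dN. ring.
Qed.

End Good.

Lemma Phi_add A B p : Phi (A + B) p = Phi A p + Phi B p.
Proof. rewrite /Phi !mxE; ring. Qed.
Lemma Phi_sub A B p : Phi (A - B) p = Phi A p - Phi B p.
Proof. rewrite /Phi !mxE; ring. Qed.
Lemma hform_add A B w : hform (A + B) w = hform A w + hform B w.
Proof. rewrite (mx2_eta A) (mx2_eta B) (cv2_eta w) addmx2 !hform2; ring. Qed.
Lemma hform_sub A B w : hform (A - B) w = hform A w - hform B w.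
Proof. rewrite (mx2_eta A) (mx2_eta B) (cv2_eta w) submx2 !hform2; ring. Qed.

Lemma plane_det (h0 h1 h3 z t : C) : cj h0 = h0 -> 0 < t ->
  Phi (mx2 h0 h1 (cj h1) h3) (z, t) = 0 ->
  \det (mx2 h0 h1 (cj h1) h3) <= 0 /\
  (\det (mx2 h0 h1 (cj h1) h3) = 0 -> [/\ h0 = 0, h1 = 0 & h3 = 0]).
Proof.
move=> ch0 Ht HP.
have H : h0 * Phi (mx2 h0 h1 (cj h1) h3) (z, t) =
   (h0 * z + cj h1) * cj (h0 * z + cj h1) + h0 * cj h0 * t ^+ 2 + \det (mx2 h0 h1 (cj h1) h3).
  rewrite /Phi !mxE det2 /= !cjE ch0; ring.
rewrite HP mulr0 in H.
set A := _ * cj _ in H; set B := _ * t ^+ 2 in H.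
have Hd : \det (mx2 h0 h1 (cj h1) h3) = - (A + B).
  by apply/eqP; rewrite -addr_eq0 addrC -H.
have A0 : 0 <= A by exact: mul_conjC_ge0.
have t2 : 0 < t ^+ 2 by rewrite exprn_gt0.
have B0 : 0 <= B by apply: mulr_ge0; [exact: mul_conjC_ge0|exact: ltW].
rewrite Hd oppr_le0 addr_ge0 //; split => // /eqP.
rewrite oppr_eq0 paddr_eq0 // => /andP [/eqP HA /eqP HB].
have h00 : h0 = 0.
  move: HB; rewrite /B => /eqP; rewrite mulf_eq0 (negbTE (lt0r_neq0 t2)) orbF.
  by rewrite mul_conjC_eq0 => /eqP.
have h10 : h1 = 0.
  move: HA; rewrite /A => /eqP; rewrite mul_conjC_eq0 h00 mul0r add0r => /eqP H1.
  by rewrite -[h1]cjK H1 (rmorph0 cj).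
split => //.
move: HP; rewrite /Phi !mxE /= h00 h10 (rmorph0 cj) !mul0r !add0r. by [].
Qed.

Lemma hform_id (h0 h1 h3 x y : C) : cj h0 = h0 ->
  h0 * hform (mx2 h0 h1 (cj h1) h3) (cv2 x y) =
  (h0 * x + cj h1 * y) * cj (h0 * x + cj h1 * y) + \det (mx2 h0 h1 (cj h1) h3) * (y * cj y).
Proof. move=> ch0; rewrite hform2 det2 !cjE ch0; ring. Qed.

Lemma definite (h0 h1 h3 x y : C) : cj h0 = h0 ->
  0 < \det (mx2 h0 h1 (cj h1) h3) -> hform (mx2 h0 h1 (cj h1) h3) (cv2 x y) = 0 -> x = 0 /\ y = 0.
Proof.
move=> ch0 Hd H0.
have Hh0 : h0 != 0.
  apply/eqP => h00; move: Hd; rewrite det2 h00 mul0r sub0r oppr_gt0 => H1.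
  by have := le_lt_trans (mul_conjC_ge0 h1) H1; rewrite ltxx.
have := hform_id h1 h3 x y ch0; rewrite H0 mulr0 => /esym/eqP.
rewrite paddr_eq0 ?mul_conjC_ge0 //; last by apply: mulr_ge0; [exact: ltW|exact: mul_conjC_ge0].
case/andP => /eqP HA /eqP HB.
have y0 : y = 0.
  move: HB => /eqP; rewrite mulf_eq0 (negbTE (lt0r_neq0 Hd)) /= mul_conjC_eq0.
  by move/eqP.
split => //.
move: HA => /eqP; rewrite mul_conjC_eq0 y0 mulr0 addr0 mulf_eq0 (negbTE Hh0) /=.
by move/eqP.
Qed.

Lemma semidef (h0 h1 h3 : C) w w' : cj h0 = h0 -> cj h3 = h3 ->
  0 <= \det (mx2 h0 h1 (cj h1) h3) ->
  0 <= hform (mx2 h0 h1 (cj h1) h3) w * hform (mx2 h0 h1 (cj h1) h3) w'.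
Proof.
move=> ch0 ch3 Hd.
rewrite (cv2_eta w) (cv2_eta w').
have [h00|Hh0] := eqVneq h0 0.
- have h10 : h1 = 0.
    move: Hd; rewrite det2 h00 mul0r sub0r oppr_ge0 => H1.
    have : h1 * cj h1 = 0 by apply/eqP; rewrite eq_le H1 mul_conjC_ge0.
    by move/eqP; rewrite mul_conjC_eq0 => /eqP.
  rewrite !hform2 h00 h10 (rmorph0 cj) !mul0r !add0r.
  have -> : h3 * w i1 0 * cj (w i1 0) * (h3 * w' i1 0 * cj (w' i1 0)) =
    (h3 * cj h3) * ((w i1 0 * cj (w i1 0)) * (w' i1 0 * cj (w' i1 0))) by rewrite ch3; ring.
  by apply: mulr_ge0; [exact: mul_conjC_ge0| apply: mulr_ge0; exact: mul_conjC_ge0].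
- have P : forall x y, 0 <= h0 * hform (mx2 h0 h1 (cj h1) h3) (cv2 x y).
    move=> x y; rewrite hform_id //; apply: addr_ge0; first exact: mul_conjC_ge0.
    by apply: mulr_ge0 => //; exact: mul_conjC_ge0.
  have := mulr_ge0 (P (w i0 0) (w i1 0)) (P (w' i0 0) (w' i1 0)).
  have -> : h0 * hform (mx2 h0 h1 (cj h1) h3) (cv2 (w i0 0) (w i1 0)) *
    (h0 * hform (mx2 h0 h1 (cj h1) h3) (cv2 (w' i0 0) (w' i1 0))) =
    (h0 * cj h0) * (hform (mx2 h0 h1 (cj h1) h3) (cv2 (w i0 0) (w i1 0)) *
      hform (mx2 h0 h1 (cj h1) h3) (cv2 (w' i0 0) (w' i1 0))) by rewrite ch0; ring.
  by rewrite pmulr_rge0 // mul_conjC_gt0.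
Qed.

Lemma act_t (g : 'M[C]_2) z t : (act g (z, t)).2 = t / den g (z, t).
Proof. by []. Qed.

Lemma Gm_comp g g' F : Gm g' (Gm g F) = Gm (g *m g') F.
Proof. by rewrite /Gm trmx_mul map_mxM !mulmxA. Qed.

Lemma Gm1 F : Gm 1%:M F = F.
Proof. by rewrite /Gm trmx1 map_mx1 mul1mx mulmx1. Qed.

Lemma Gm_det g F : \det g = 1 -> \det (Gm g F) = \det F.
Proof. by move=> H; rewrite /Gm !det_mulmx det_tr det_map_mx H /= cj1 mul1r mulr1. Qed.

Lemma hform_Gm g F w : hform (Gm g F) w = hform F (g *m w).
Proof. by rewrite hform_mul. Qed.

Lemma par2 (A B : 'M[C]_2) : \det (A + B) + \det (A - B) = 2%:R * \det A + 2%:R * \det B.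
Proof. rewrite (mx2_eta A) (mx2_eta B) addmx2 submx2 !det2; ring. Qed.

Definition ginv (g : 'M[C]_2) := mx2 (g i1 i1) (- g i0 i1) (- g i1 i0) (g i0 i0).

Lemma ginv_det g : \det g = 1 -> \det (ginv g) = 1.
Proof. rewrite {1}(mx2_eta g) !det2 => <-; ring. Qed.

Lemma mul_ginv g : \det g = 1 -> g *m ginv g = 1%:M.
Proof. rewrite {1 2}(mx2_eta g) det2 mulmx2 -mx2_1 => H; congr mx2; rewrite -?H; ring. Qed.

Lemma act_ginv g q : \det g = 1 -> inH3 q -> act g (act (ginv g) q) = q.
Proof.
move=> H Hq; rewrite {1}(mx2_eta g) /ginv; apply: act_inv2 => //.
by move: H; rewrite {1}(mx2_eta g) det2.
Qed.

Lemma ctrmxD (A B : 'M[C]_2) : ctrmx (A + B) = ctrmx A + ctrmx B.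
Proof. apply/matrixP => i j; rewrite !mxE; exact: cjD. Qed.
Lemma ctrmxB (A B : 'M[C]_2) : ctrmx (A - B) = ctrmx A - ctrmx B.
Proof. apply/matrixP => i j; rewrite !mxE; exact: cjB. Qed.
Lemma ctrmx_Gm g (A : 'M[C]_2) : ctrmx (Gm g A) = Gm g (ctrmx A).
Proof.
rewrite /ctrmx /Gm !trmx_mul trmxK !map_mxM !map_trmx map_cjK !mulmxA. by [].
Qed.

Lemma herm_eta (M : 'M[C]_2) : ctrmx M = M ->
  [/\ M = mx2 (M i0 i0) (M i0 i1) (cj (M i0 i1)) (M i1 i1), cj (M i0 i0) = M i0 i0 & cj (M i1 i1) = M i1 i1].
Proof.
move=> H.
have E : forall i j, cj (M j i) = M i j by move=> i j; rewrite -{2}H !mxE.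
split; [|exact: E|exact: E].
by rewrite {1}(mx2_eta M) E.
Qed.

Lemma herm_plane (M : 'M[C]_2) z t : ctrmx M = M -> 0 < t -> Phi M (z, t) = 0 ->
  \det M <= 0 /\ (\det M = 0 -> M = 0).
Proof.
move=> /herm_eta [E c0 c3] Ht HP.
rewrite E in HP *.
have [D1 D2] := plane_det c0 Ht HP.
split => // /D2 [-> -> ->]. rewrite (rmorph0 cj).
by apply/matrixP => i j; rewrite !mxE; case: ifP => _; case: ifP.
Qed.

Lemma herm_definite (M : 'M[C]_2) w : ctrmx M = M -> 0 < \det M -> hform M w = 0 -> w = 0.
Proof.
move=> /herm_eta [E c0 c3] Hd H0.
rewrite E (cv2_eta w) in Hd H0.
have [H1 H2] := definite c0 Hd H0.
rewrite (cv2_eta w) H1 H2.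
by apply/matrixP => i j; rewrite !mxE; case: ifP.
Qed.

Lemma herm_semidef (M : 'M[C]_2) w w' : ctrmx M = M -> 0 <= \det M -> 0 <= hform M w * hform M w'.
Proof.
move=> /herm_eta [E c0 c3] Hd.
rewrite E in Hd *. exact: semidef.
Qed.

Section Main.
Variables (d r : nat) (u v m c : int).
Local Notation s' := (d %/ r)%N.
Hypothesis Hd : (0 < d)%N.
Hypothesis Hr : (0 < r)%N.
Hypothesis Hdr : d = (s' * r)%N.
Hypothesis Hc : u * s'%:Z + v * r%:Z + 1 = 0.
Local Notation dl := (sqrt_md d).
Local Notation N := (m * m - d%:Z * c).
Hypothesis HN0 : 0 < N.
Hypothesis HN4 : 4 * N < d%:Z.

Definition sigma := mx2 dl r%:R (v * r%:Z)%:~R (u%:~R * dl).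
Definition Am := mx2 d%:R (m%:~R * dl) (- (m%:~R * dl)) (d%:R * c%:~R).
Definition F := ctrmx sigma *m Am *m sigma.
Definition X0 : int := s'%:Z + 2 * m * v + c * v * v * r%:Z.
Definition Z0 : int := r%:Z - 2 * m * u + s'%:Z * c * u * u.
Definition Y : int := - d%:Z + m * u * s'%:Z + d%:Z * c * u * v - m * v * r%:Z.

Lemma dC : (d%:R : C) = s'%:R * r%:R.
Proof. by rewrite {1}Hdr natrM. Qed.

Lemma F_eq : F = hm d r Y X0 Z0 0.
Proof.
have cdl := dl_cj Hd.
have H1 : dl * dl = - (s'%:R * r%:R) by rewrite dl_sq // dC.
rewrite /F /sigma /Am /hm ctrmxE map2 tr2 !mulmx2 mulr0 addr0.
rewrite /X0 /Z0 /Y !cjE cdl !cj_int !cj_nat.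
congr mx2; rewrite ?(intrD, intrM, intrN, intrB) ?natC ?dC; ring: H1.
Qed.

Lemma HNY : Y * Y - d%:Z * X0 * Z0 = N.
Proof.
have E : Y * Y - d%:Z * X0 * Z0 - N = (u * s'%:Z + v * r%:Z + 1) *
  (- u * r%:Z * s'%:Z * s'%:Z * c + u * s'%:Z * m * m - v * r%:Z * r%:Z * s'%:Z * c + v * r%:Z * m * m + r%:Z * s'%:Z * c - m * m).
  have Hd' : d%:Z = s'%:Z * r%:Z by rewrite {1}Hdr PoszM.
  rewrite /Y /X0 /Z0 Hd'. ring.
by apply/eqP; rewrite -subr_eq0 E Hc mul0r.
Qed.

Lemma F_herm : ctrmx F = F.
Proof.
rewrite F_eq /hm ctrmxE map2 tr2 !cjE !cj_int !cj_nat. by [].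
Qed.

Lemma detF : \det F = (- (r%:Z * r%:Z * d%:Z * N))%:~R.
Proof. by rewrite F_eq (det_F r Hd HNY). Qed.

Lemma F_circle : is_circle F.
Proof.
split; first exact: F_herm.
rewrite detF -[0 : C]/((0 : int)%:~R) ltr_int oppr_lt0.
by rewrite !pmulr_rgt0 // ltz_nat.
Qed.


Lemma G_good g : in_SL2Od d g -> exists p t : int, exists z, in_Od d z /\ Gm g F = hm d r Y p t z.
Proof.
move=> Hg; rewrite F_eq.
have H0 : in_Od d 0 by exists 0, 0; rewrite mul0r addr0.
exact: (good_step r Y Hd X0 Z0 Hg H0).
Qed.

Lemma int_facts (l : int) :
  (- (r%:Z * r%:Z * d%:Z * (4 * N + d%:Z * l)))%:~R <= (0 : C) ->
  (4 * (- (r%:Z * r%:Z * d%:Z * N)) + r%:Z * r%:Z * d%:Z * (4 * N + d%:Z * l))%:~R <= (0 : C) ->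
  l = 0.
Proof.
rewrite -[0 : C]/((0 : int)%:~R) !ler_int => H1 H2.
have P : 0 < r%:Z * r%:Z * d%:Z by rewrite !pmulr_rgt0 // ltz_nat.
have E : 4 * (- (r%:Z * r%:Z * d%:Z * N)) + r%:Z * r%:Z * d%:Z * (4 * N + d%:Z * l) = (r%:Z * r%:Z * d%:Z) * (d%:Z * l) by ring.
rewrite E pmulr_rle0 // in H2.
rewrite oppr_le0 pmulr_rge0 // in H1.
have dp : 0 < d%:Z by rewrite ltz_nat.
nia.
Qed.

Lemma embedded_F : embedded d F.
Proof.
move=> g Hg. have Hdet := proj2 Hg.
have [p [t [z [Hz GE]]]] := G_good Hg.
have [l Hl] := det_sum r Hd HNY p t Hz.
have [HGF|HGF] := eqVneq (Gm g F) F.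
- left => q; split.
  + case=> p0 [[Hp0 HP0] ->]. case: p0 Hp0 HP0 => z0 t0 /= Hp0 HP0.
    have D0 := den_gt0 z0 Hdet Hp0.
    split; first by rewrite /inH3 act_t divr_gt0.
    have := Phi_act F Hdet (real_cj Hp0) (lt0r_neq0 D0).
    rewrite HGF. change (Phi F (z0, t0) = 0) in HP0. rewrite HP0 => /eqP.
    rewrite mulf_eq0 (negbTE (lt0r_neq0 D0)) orbF => /eqP H. exact: H.
  + case: q => zq tq [Hq HPq]; rewrite /inH3 /= in Hq.
    exists (act (ginv g) (zq, tq)); split; last by rewrite act_ginv.
    have Hdet' := ginv_det Hdet.
    have D0 := den_gt0 zq Hdet' Hq.
    split; first by rewrite /inH3 act_t divr_gt0.
    have := Phi_act F Hdet' (real_cj Hq) (lt0r_neq0 D0).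
    rewrite -{2}HGF Gm_comp mul_ginv // Gm1.
    change (Phi F (zq, tq) = 0) in HPq. rewrite HPq => /eqP.
    rewrite mulf_eq0 (negbTE (lt0r_neq0 D0)) orbF => /eqP H. exact: H.
- right => q [[p0 [[Hp0 HP0] ->]] [Hq HPq]].
  case: p0 Hp0 HP0 Hq HPq => z0 t0 /= Hp0 HP0 Hq HPq.
  change (Phi F (z0, t0) = 0) in HP0.
  change (Phi F (act g (z0, t0)) = 0) in HPq.
  have D0 := den_gt0 z0 Hdet Hp0.
  have HG : Phi (Gm g F) (z0, t0) = 0 by rewrite -Phi_act // ?real_cj ?lt0r_neq0 // HPq mul0r.
  have Hs : Phi (F + Gm g F) (z0, t0) = 0 by rewrite Phi_add HP0 HG addr0.
  have Hm : Phi (F - Gm g F) (z0, t0) = 0 by rewrite Phi_sub HP0 HG subr0.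
  have Hpar := par2 F (Gm g F).
  rewrite Gm_det // detF in Hpar.
  have DS : \det (F + Gm g F) = (- (r%:Z * r%:Z * d%:Z * (4 * N + d%:Z * l)))%:~R.
    by rewrite {1}F_eq GE.
  have DM : \det (F - Gm g F) = (4 * (- (r%:Z * r%:Z * d%:Z * N)) + r%:Z * r%:Z * d%:Z * (4 * N + d%:Z * l))%:~R.
    apply: (addrI (\det (F + Gm g F))). rewrite Hpar DS -intrD.
    rewrite -[(2%:R : C)]/((2 : int)%:~R) -!intrM -intrD; apply: congr1; ring.
  have HF := F_herm.
  have HGh : ctrmx (Gm g F) = Gm g F by rewrite ctrmx_Gm HF.
  have [Ds _] := herm_plane (etrans (ctrmxD _ _) (congr2 +%R HF HGh)) Hp0 Hs.
  have [Dm Dm0] := herm_plane (etrans (ctrmxB _ _) (congr2 (fun a b => a - b) HF HGh)) Hp0 Hm.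
  rewrite DS in Ds. rewrite DM in Dm.
  have l0 := int_facts Ds Dm.
  move: HGF => /eqP; apply.
  apply/eqP; rewrite eq_sym -subr_eq0; apply/eqP; apply: Dm0.
  by rewrite DM l0 -[0 : C]/((0 : int)%:~R); apply: congr1; ring.
Qed.


Lemma dets g : in_SL2Od d g -> exists l : int,
  \det (F + Gm g F) = (- (r%:Z * r%:Z * d%:Z * (4 * N + d%:Z * l)))%:~R /\
  \det (F - Gm g F) = (r%:Z * r%:Z * d%:Z * (d%:Z * l))%:~R.
Proof.
move=> Hg. have Hdet := proj2 Hg.
have [p [t [z [Hz GE]]]] := G_good Hg.
have [l Hl] := det_sum r Hd HNY p t Hz.
exists l.
have Hpar := par2 F (Gm g F).
rewrite Gm_det // detF in Hpar.
have DS : \det (F + Gm g F) = (- (r%:Z * r%:Z * d%:Z * (4 * N + d%:Z * l)))%:~R.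
  by rewrite {1}F_eq GE.
split => //.
apply: (addrI (\det (F + Gm g F))). rewrite Hpar DS -intrD.
rewrite -[(2%:R : C)]/((2 : int)%:~R) -!intrM -intrD; apply: congr1; ring.
Qed.

Definition Sadj := mx2 (- (u%:~R * dl)) (- r%:R) (- (v * r%:Z)%:~R) (- dl).

Lemma S_Sadj : map_mx cj sigma *m Sadj = r%:R *: 1%:M.
Proof.
have cdl := dl_cj Hd.
have H1 : dl * dl = - (s'%:R * r%:R) by rewrite dl_sq // dC.
have Hc' : (u%:~R * s'%:R : C) = -1 - v%:~R * r%:R.
  have Hci : u * s'%:Z = -1 - v * r%:Z by nia.
  rewrite -[(s'%:R : C)]/((s'%:Z)%:~R : C) -[(r%:R : C)]/((r%:Z)%:~R : C).
  by rewrite -!intrM Hci intrB intrN intrM.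
rewrite /sigma /Sadj map2 mulmx2 -mx2_1.
apply/matrixP => i j; rewrite !mxE.
rewrite !cjE cdl !cj_int !cj_nat intrM natC.
case: (ord2_cases i) => ->; case: (ord2_cases j) => -> /=; ring: H1 Hc'.
Qed.

Lemma hform_F x : hform F (Sadj *m x) = r%:R * r%:R * hform Am x.
Proof.
rewrite /F hform_ct mulmxA S_Sadj -scalemxAl mul1mx hform_scale cj_nat. by [].
Qed.

Lemma w_neq0 (x : 'cV[C]_2) : x != 0 -> Sadj *m x != 0.
Proof.
move=> Hx; apply/eqP => H.
have : map_mx cj sigma *m (Sadj *m x) = 0 by rewrite H mulmx0.
rewrite mulmxA S_Sadj -scalemxAl mul1mx => /eqP; rewrite scaler_eq0 pnatr_eq0.
by rewrite (negbTE Hx) orbF => /eqP Hr0; move: Hr; rewrite Hr0.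
Qed.

Local Notation ssq := (sqrtC ((N%:~R : C))).

Lemma NC' : (N%:~R : C) = m%:~R * m%:~R - d%:R * c%:~R.
Proof. by rewrite intrB !intrM natC. Qed.

Lemma hA_plus : hform Am (cv2 1 0) = d%:R.
Proof. rewrite /Am hform2 !cjE; ring. Qed.

Lemma hA_minus : hform Am (cv2 (- m%:~R) dl) = - (N%:~R * d%:R).
Proof.
have cdl := dl_cj Hd. have H1 : dl * dl = - d%:R by rewrite dl_sq.
rewrite /Am hform2 !cjE cdl cj_int NC'; ring: H1.
Qed.

Lemma hA_zero : hform Am (cv2 (ssq - m%:~R) dl) = 0.
Proof.
have cdl := dl_cj Hd. have H1 : dl * dl = - d%:R by rewrite dl_sq.
have Hs : ssq * ssq = m%:~R * m%:~R - d%:R * c%:~R by rewrite -expr2 sqrtCK NC'.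
have cs : cj ssq = ssq.
  apply/CrealP; apply: ger0_real; rewrite sqrtC_ge0 -[0 : C]/((0:int)%:~R) ler_int.
  exact: ltW.
rewrite /Am hform2 !cjE cdl cj_int cs; ring: H1 Hs.
Qed.

Lemma orientable_F : orientable d F.
Proof.
move=> g Hg Hpres [Hpos Hneg].
have [l [DS DM]] := dets Hg.
pose wp := Sadj *m cv2 1 0.
pose wm := Sadj *m cv2 (- m%:~R) dl.
pose w0 := Sadj *m cv2 (ssq - m%:~R) dl.
have r2 : (0 : C) < r%:R * r%:R by rewrite -natrM ltr0n muln_gt0 Hr.
have dC0 : (0 : C) < d%:R by rewrite ltr0n.
have NC0 : (0 : C) < N%:~R by rewrite -[0 : C]/((0:int)%:~R) ltr_int.
have nwp : wp != 0 by apply: w_neq0; apply: cv2_neq0; left; exact: oner_neq0.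
have nwm : wm != 0.
  by apply: w_neq0; apply: cv2_neq0; right; exact: dl_neq0.
have nw0 : w0 != 0.
  by apply: w_neq0; apply: cv2_neq0; right; exact: dl_neq0.
have Fwp : 0 < hform F wp by rewrite /wp hform_F hA_plus mulr_gt0.
have Fwm : hform F wm < 0.
  by rewrite /wm hform_F hA_minus mulrN oppr_lt0 mulr_gt0 // mulr_gt0.
have Fw0 : hform F w0 = 0 by rewrite /w0 hform_F hA_zero mulr0.
have Gwp : hform (Gm g F) wp < 0.
  rewrite hform_Gm. have [_ H] := (Hpos (g *m wp)).1 (ex_intro _ wp (conj (conj nwp Fwp) erefl)).
  exact: H.
have Gwm : 0 < hform (Gm g F) wm.
  rewrite hform_Gm. have [_ H] := (Hneg (g *m wm)).1 (ex_intro _ wm (conj (conj nwm Fwm) erefl)).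
  exact: H.
have Gw0 : hform (Gm g F) w0 = 0.
  rewrite hform_Gm. have [_ H] := (Hpres (g *m w0)).1 (ex_intro _ w0 (conj (conj nw0 Fw0) erefl)).
  exact: H.
have HF := F_herm.
have HGh : ctrmx (Gm g F) = Gm g F by rewrite ctrmx_Gm HF.
have [ln|lp] := ltP l 0.
- have Dp : 0 < \det (F + Gm g F).
    rewrite DS -[0 : C]/((0:int)%:~R) ltr_int oppr_gt0.
    have P : 0 < r%:Z * r%:Z * d%:Z by rewrite !pmulr_rgt0 // ltz_nat.
    rewrite pmulr_rlt0 //.
    have dp : 0 < d%:Z by rewrite ltz_nat.
    nia.
  have := @herm_definite (F + Gm g F) w0 (etrans (ctrmxD _ _) (congr2 +%R HF HGh)) Dp.
  rewrite hform_add Fw0 Gw0 addr0 => /(_ erefl) H0.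
  by move: nw0; rewrite H0 eqxx.
- have Dm : 0 <= \det (F - Gm g F).
    rewrite DM -[0 : C]/((0:int)%:~R) ler_int.
    apply: mulr_ge0; first by apply: mulr_ge0; [apply: mulr_ge0|] ; rewrite ?lez_nat.
    by apply: mulr_ge0; rewrite ?lez_nat.
  have := herm_semidef wp wm (etrans (ctrmxB _ _) (congr2 (fun a b => a - b) HF HGh)) Dm.
  rewrite !hform_sub.
  have A1 : 0 < hform F wp - hform (Gm g F) wp by rewrite subr_gt0 (lt_trans Gwp Fwp).
  have A2 : hform F wm - hform (Gm g F) wm < 0 by rewrite subr_lt0 (lt_trans Fwm Gwm).
  have Hn : (hform F wp - hform (Gm g F) wp) * (hform F wm - hform (Gm g F) wm) < 0 by rewrite pmulr_rlt0.
  by move/(lt_le_trans Hn); rewrite ltxx.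
Qed.

Lemma main_F : orientable_embedded_tg_surface d F.
Proof. split; [exact: F_circle| split; [exact: embedded_F|exact: orientable_F]]. Qed.
End Main.

Theorem proposition5p4 (d : nat) (r : nat) (s u v m c : int) :
  (0 < d)%N -> squarefree d ->
  (0 < r)%N -> (r %| d)%N ->
  s = - ((d %/ r)%N)%:Z ->
  u * s - v * r%:Z = 1 ->
  (0 : rat) < m%:~R -> (m%:~R : rat) < d%:R / 2%:R ->
  (0 : rat) < (m ^+ 2 - d%:Z * c)%:~R -> ((m ^+ 2 - d%:Z * c)%:~R : rat) < d%:R / 4%:R ->
  let sq := sqrt_md d in
  let sigma := mx2 sq r%:R (v * r%:Z)%:~R (u%:~R * sq) in
  let A := mx2 d%:R (m%:~R * sq) (- (m%:~R * sq)) (d%:R * c%:~R) in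
  orientable_embedded_tg_surface d (ctrmx sigma *m A *m sigma).
Proof.
move=> Hd _ Hr Hrd Hs Huv _ _ HN0 HN4 sq sig A.
have Hdr : d = (d %/ r * r)%N by rewrite divnK.
have Hc : u * (d %/ r)%:Z + v * r%:Z + 1 = 0.
  by move: Huv; rewrite Hs => Huv; nia.
have HN0' : 0 < m * m - d%:Z * c.
  by move: HN0; rewrite -[0 : rat]/((0 : int)%:~R) ltr_int expr2.
have HN4' : 4 * (m * m - d%:Z * c) < d%:Z.
  move: HN4; rewrite ltr_pdivlMr ?ltr0n // -expr2.
  rewrite -[(4%:R : rat)]/((4 : int)%:~R) -intrM -[(d%:R : rat)]/((d%:Z)%:~R) ltr_int.
  move=> H; lia.
exact: (main_F Hd Hr Hdr Hc HN0' HN4').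
Qed.
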